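(* (Euler's Formula for Resistance Function II.) Let $\Gamma$ be a metrized graph whose edges $e_i\in E(\Gamma)$ have end points $p_i,q_i$ and lengths $L_i$. For any $s,t\in V(\Gamma)$, $$r(s,t)=\frac14\sum_{e_i\in E(\Gamma)}\frac{1}{L_i}\Big[r(p_i,s)-r(q_i,s)-r(p_i,t)+r(q_i,t)\Big]^2.$$
   Context: A metrized graph $\Gamma$ is a finite connected graph (multiple edges and self-loops allowed) in which each edge is identified with a closed line segment of positive length; $V(\Gamma)$ is a chosen finite vertex set and $E(\Gamma)$ the resulting edge set. $\Gamma$ is regarded as a resistive electric circuit in which each edge is a resistor whose resistance equals its length, and $r(x,y)$ denotes the effective resistance between $x$ and $y$. *)

(* Defs.v *)
From HB Require Import structures.
From mathcomp Require Import all_boot all_order all_algebra.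
Set Implicit Arguments. Unset Strict Implicit. Unset Printing Implicit Defensive.
Import Order.TTheory GRing.Theory Num.Theory.
Local Open Scope ring_scope.

(* A metrized graph with vertex set V (a finite type), edges indexed by 'I_m;
   edge i has end points p i, q i (p i = q i allowed: self-loop; parallel
   edges allowed) and length L i > 0. *)

Definition madj (V : finType) (m : nat) (p q : 'I_m -> V) : rel V :=
  fun x y => [exists i : 'I_m, ((p i == x) && (q i == y)) || ((p i == y) && (q i == x))].

Definition mconnected (V : finType) (m : nat) (p q : 'I_m -> V) : Prop :=
  forall x y : V, connect (madj p q) x y.

(* Kirchhoff's current law: v is the potential when a unit current enters the
   circuit at x and leaves at y (each edge is a resistor of resistance L i). *)
Definition unit_current_potential (R : realFieldType) (V : finType) (m : nat)
    (p q : 'I_m -> V) (L : 'I_m -> R) (x y : V) (v : V -> R) : Prop :=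
  forall z : V,
    \sum_(i < m) (((p i == z)%:R - (q i == z)%:R) * (v (p i) - v (q i)) / L i)
      = (z == x)%:R - (z == y)%:R.

Definition is_resistance_function (R : realFieldType) (V : finType) (m : nat)
    (p q : 'I_m -> V) (L : 'I_m -> R) (r : V -> V -> R) : Prop :=
  forall x y : V, exists v : V -> R,
    unit_current_potential p q L x y v /\ r x y = v x - v y.

(* Main.v *)
Require Import Defs.
From HB Require Import structures.
From mathcomp Require Import all_boot all_order all_algebra.
From mathcomp Require Import ring lra.
Import Order.TTheory GRing.Theory Num.Theory.
Local Open Scope ring_scope.

Section Aux.
Variables (R : realFieldType) (V : finType) (m : nat)
    (p q : 'I_m -> V) (L : 'I_m -> R).

Definition Bf (v w : V -> R) :=
  \sum_(i < m) (v (p i) - v (q i)) * (w (p i) - w (q i)) / L i.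

Lemma Bf_sym v w : Bf v w = Bf w v.
Proof. by apply: eq_bigr => i _; rewrite (mulrC (v _ - _)). Qed.

Lemma sumw (w : V -> R) a : \sum_z w z * (a == z)%:R = w a.
Proof.
rewrite (bigD1 a) //= eqxx mulr1 big1 ?addr0 // => z Hz.
by rewrite eq_sym (negbTE Hz) mulr0.
Qed.

Lemma sumw' (w : V -> R) a : \sum_z w z * (z == a)%:R = w a.
Proof. rewrite -(sumw w a); apply: eq_bigr => z _; by rewrite eq_sym. Qed.

Lemma Kl x y v w : unit_current_potential p q L x y v -> Bf v w = w x - w y.
Proof.
move=> Hv.
have -> : w x - w y = \sum_z w z * ((z == x)%:R - (z == y)%:R).
  by rewrite -sumw' -(sumw' w y) -sumrB; apply: eq_bigr => z _; rewrite mulrBr.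
under [RHS]eq_bigr => z _ do rewrite -Hv mulr_sumr.
rewrite exchange_big /=; apply: eq_bigr => i _.
have -> : w (p i) - w (q i) = \sum_z w z * ((p i == z)%:R - (q i == z)%:R).
  by rewrite -sumw -(sumw w (q i)) -sumrB; apply: eq_bigr => z _; rewrite mulrBr.
rewrite (mulrC (v _ - _)) -mulrA mulr_suml; apply: eq_bigr => z _.
by rewrite !mulrA.
Qed.

Lemma recip x y c d v w : unit_current_potential p q L x y v ->
  unit_current_potential p q L c d w -> w x - w y = v c - v d.
Proof. by move=> Hv Hw; rewrite -(Kl _ _ _ w Hv) Bf_sym (Kl _ _ _ v Hw). Qed.

Lemma upot_sub x y z v w : unit_current_potential p q L x z v ->
  unit_current_potential p q L y z w ->
  unit_current_potential p q L x y (fun a => v a - w a).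
Proof.
move=> Hv Hw a.
have -> : (a == x)%:R - (a == y)%:R = ((a == x)%:R - (a == z)%:R) - ((a == y)%:R - (a == z)%:R) :> R.
  by rewrite opprB addrA subrK.
rewrite -Hv -Hw -sumrB; apply: eq_bigr => i _; ring.
Qed.

End Aux.
Arguments recip {R V m p q L x y c d v w}.
Arguments upot_sub {R V m p q L x y z v w}.

Theorem theorem3p9 (R : realFieldType) (V : finType) (m : nat)
    (p q : 'I_m -> V) (L : 'I_m -> R)
    (hL : forall i, 0 < L i)
    (hconn : mconnected p q)
    (r : V -> V -> R) (hr : is_resistance_function p q L r)
    (s t : V) :
  r s t = 4^-1 * \sum_(i < m)
            (L i)^-1 * (r (p i) s - r (q i) s - r (p i) t + r (q i) t) ^+ 2.
Proof.
have [u [Hu ->]] := hr s t.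
have uniq x y c d v w : unit_current_potential p q L x y v ->
    unit_current_potential p q L x y w -> v c - v d = w c - w d.
  move=> Hv Hw; have [g [Hg _]] := hr c d.
  by rewrite (recip Hg Hv) (recip Hg Hw).
have key a b : r a s - r b s - r a t + r b t = - (2 * (u a - u b)).
  have [ga [Ha _]] := hr a t; have [gb [Hb _]] := hr b t.
  have [v1 [H1 ->]] := hr a s; have [v2 [H2 ->]] := hr b s.
  have [v3 [H3 ->]] := hr a t; have [v4 [H4 ->]] := hr b t.
  rewrite (uniq _ _ _ _ _ _ H1 (upot_sub Ha Hu)) (uniq _ _ _ _ _ _ H2 (upot_sub Hb Hu)).
  rewrite (uniq _ _ _ _ _ _ H3 Ha) (uniq _ _ _ _ _ _ H4 Hb).
  have R1 := recip Ha Hu; have R2 := recip Hb Hu.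
  have R3 := uniq _ _ a b _ _ Hu Hu.
  lra.
under eq_bigr => i _ do rewrite key.
rewrite -(@Kl _ _ _ _ _ _ _ _ _ u Hu) /Bf mulr_sumr; apply: eq_bigr => i _.
have hLi : L i != 0 by rewrite lt0r_neq0.
rewrite sqrrN; field.
exact: hLi.
Qed.
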